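(* Let $\lambda\geqslant 1$ be a cardinal and $n$ a positive integer. Then the semigroup $\mathscr{I}_\lambda^n$ is algebraically $h$-closed in the class of (Hausdorff) topological inverse semigroups. Explicitly: for every (Hausdorff) topological inverse semigroup $S$ and every homomorphism $h\colon \mathscr{I}_\lambda^n\to S$, the image $(\mathscr{I}_\lambda^n)h$ is a closed subset of $S$.
   Context: All topological spaces are Hausdorff. A topological (inverse) semigroup is a topological space with a continuous semigroup operation (and, for inverse semigroups, continuous inversion $a\mapsto a^{-1}$, where $a^{-1}$ is the unique element with $aa^{-1}a=a$, $a^{-1}aa^{-1}=a^{-1}$). For a set $X$ of cardinality $\lambda$, $\mathscr{I}(X)$ is the symmetric inverse semigroup of all partial one-to-one maps of $X$ (including the empty map) under composition $x(\alpha\beta)=(x\alpha)\beta$ on $\operatorname{dom}(\alpha\beta)=\{y\in\operatorname{dom}\alpha: y\alpha\in\operatorname{dom}\beta\}$; the rank of $\alpha$ is $|\operatorname{ran}\alpha|$, and $\mathscr{I}_\lambda^n=\{\alpha\in\mathscr{I}(X): \operatorname{rank}\alpha\leqslant n\}$. Given a class $\mathfrak{S}$ of topological semigroups: $S\in\mathfrak{S}$ is $H$-closed in $\mathfrak{S}$ if $S$ is closed in every $T\in\mathfrak{S}$ containing $S$ as a (topological) subsemigroup; $S\in\mathfrak{S}$ is absolutely $H$-closed in $\mathfrak{S}$ if every continuous homomorphic image of $S$ in any $T\in\mathfrak{S}$ (with the subspace topology) is $H$-closed in $\mathfrak{S}$; a semigroup $S$ is algebraically $h$-closed in $\mathfrak{S}$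 if $S$ with the discrete topology belongs to $\mathfrak{S}$ and is absolutely $H$-closed in $\mathfrak{S}$. *)

(* Defs.v *)
From Stdlib Require Import List.
Import ListNotations.

Definition is_topology {X : Type} (open : (X -> Prop) -> Prop) : Prop :=
  open (fun _ => True) /\
  (forall U V, open U -> open V -> open (fun x => U x /\ V x)) /\
  (forall F : (X -> Prop) -> Prop,
      (forall U, F U -> open U) -> open (fun x => exists U, F U /\ U x)).

Definition hausdorff {X : Type} (open : (X -> Prop) -> Prop) : Prop :=
  forall x y : X, x <> y ->
    exists U V, open U /\ open V /\ U x /\ V y /\
                (forall z, U z -> V z -> False).

Definition closed_set {X : Type} (open : (X -> Prop) -> Prop) (A : X -> Prop) : Prop :=
  open (fun x => ~ A x).

Definition continuous1 {X : Type} (open : (X -> Prop) -> Prop) (f : X -> X) : Prop :=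
  forall U, open U -> open (fun x => U (f x)).

(* continuity of a binary map X x X -> X, X x X carrying the product
   topology: at every point (a,b), every open neighbourhood of f a b contains
   the image of a basic open box V x W around (a,b). *)
Definition continuous2 {X : Type} (open : (X -> Prop) -> Prop) (f : X -> X -> X) : Prop :=
  forall U a b, open U -> U (f a b) ->
    exists V W, open V /\ open W /\ V a /\ W b /\
                (forall x y, V x -> W y -> U (f x y)).

Definition is_inverse_semigroup {S : Type} (mul : S -> S -> S) (inv : S -> S) : Prop :=
  (forall a b c, mul (mul a b) c = mul a (mul b c)) /\
  (forall a, mul (mul a (inv a)) a = a /\ mul (mul (inv a) a) (inv a) = inv a) /\
  (forall a b, mul (mul a b) a = a -> mul (mul b a) b = b -> b = inv a).

Definition is_hausdorff_top_inv_semigroup {S : Type}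
    (open : (S -> Prop) -> Prop) (mul : S -> S -> S) (inv : S -> S) : Prop :=
  is_topology open /\ hausdorff open /\ is_inverse_semigroup mul inv /\
  continuous2 open mul /\ continuous1 open inv.

(* partial maps of X, as X -> option X (None = undefined) *)
Definition pmap (X : Type) := X -> option X.

Definition pinj {X : Type} (f : pmap X) : Prop :=
  forall x y z, f x = Some z -> f y = Some z -> x = y.

Definition rank_le {X : Type} (n : nat) (f : pmap X) : Prop :=
  exists l : list X, length l <= n /\ forall x y, f x = Some y -> In y l.

(* composition x(fg) = (xf)g, defined on {x in dom f | xf in dom g} *)
Definition pcomp {X : Type} (f g : pmap X) : pmap X :=
  fun x => match f x with Some y => g y | None => None end.

Definition in_In {X : Type} (n : nat) (f : pmap X) : Prop := pinj f /\ rank_le n f.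

(* I_lambda^n with lambda = |X| *)
Definition In_sg (X : Type) (n : nat) := { f : pmap X | in_In n f }.

Lemma in_In_comp {X : Type} (n : nat) (f g : pmap X) :
  in_In n f -> in_In n g -> in_In n (pcomp f g).
Proof.
  intros [If _] [Ig [l [Hl Hr]]]; split.
  - intros x y z Hx Hy; unfold pcomp in *.
    destruct (f x) as [u|] eqn:Ex; [|discriminate].
    destruct (f y) as [v|] eqn:Ey; [|discriminate].
    assert (u = v) by (eapply Ig; eauto). subst v. eapply If; eauto.
  - exists l; split; [exact Hl|].
    intros x y H; unfold pcomp in H. destruct (f x); [eapply Hr; eauto | discriminate].
Qed.

Definition In_mul {X : Type} {n : nat} (a b : In_sg X n) : In_sg X n :=
  exist _ (pcomp (proj1_sig a) (proj1_sig b))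
        (in_In_comp n _ _ (proj2_sig a) (proj2_sig b)).

Definition is_hom {X S : Type} {n : nat} (mul : S -> S -> S) (h : In_sg X n -> S) : Prop :=
  forall a b, h (In_mul a b) = mul (h a) (h b).

(* Main.v *)
Require Import Defs.
From Stdlib Require Import List Classical ClassicalEpsilon FunctionalExtensionality ProofIrrelevance PropExtensionality Arith Lia.
Import ListNotations.

Definition deq {X:Type} (x y : X) : {x=y}+{x<>y} := excluded_middle_informative (x=y).

Lemma sig_ext {X n} (x y : In_sg X n) : (forall z, proj1_sig x z = proj1_sig y z) -> x = y.
Proof.
  destruct x as [x px], y as [y py]; simpl; intros H.
  assert (x = y) by (apply functional_extensionality; exact H). subst.
  f_equal; apply proof_irrelevance.
Qed.

Definition ainv {X} (a : pmap X) : pmap X := fun y =>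
  match excluded_middle_informative (exists x, a x = Some y) with
  | left H => Some (proj1_sig (constructive_indefinite_description _ H))
  | right _ => None end.

Lemma ainv_some {X} (a : pmap X) : pinj a -> forall x y, ainv a y = Some x <-> a x = Some y.
Proof.
  intros Ha x y; unfold ainv.
  destruct (excluded_middle_informative _) as [H|H].
  - destruct (constructive_indefinite_description _ H) as [x' Hx']; simpl.
    split; intros E.
    + inversion E; subst; exact Hx'.
    + f_equal; eapply Ha; eauto.
  - split; intros E; [discriminate| exfalso; apply H; eauto].
Qed.

Lemma ainv_In {X n} (a : pmap X) : in_In n a -> in_In n (ainv a).
Proof.
  intros [Ha [l [Hl Hr]]]; split.
  - intros y1 y2 x E1 E2. apply (ainv_some a Ha) in E1. apply (ainv_some a Ha) in E2. congruence.
  - exists (flat_map (fun y => match ainv a y with Some x => [x] | None => [] end) l).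
    split.
    + assert (forall l0, length (flat_map (fun y => match ainv a y with Some x => [x] | None => [] end) l0) <= length l0).
      { induction l0 as [|b l0 IH]; simpl; [lia|]. rewrite length_app.
        destruct (ainv a b); simpl; lia. }
      specialize (H l). lia.
    + intros y x E. apply in_flat_map. exists y. split.
      * apply (ainv_some a Ha) in E. eapply Hr; eauto.
      * rewrite E; simpl; auto.
Qed.

Definition sinv {X n} (a : In_sg X n) : In_sg X n :=
  exist _ (ainv (proj1_sig a)) (ainv_In _ (proj2_sig a)).

Lemma ainv_id1 {X} (a : pmap X) : pinj a -> forall x, pcomp (pcomp a (ainv a)) a x = a x.
Proof. intros Ha x; unfold pcomp. destruct (a x) as [y|] eqn:E; auto.
  assert (H : ainv a y = Some x) by (apply ainv_some; auto). rewrite H. exact E. Qed.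

Lemma ainv_id2 {X} (a : pmap X) : pinj a -> forall y, pcomp (pcomp (ainv a) a) (ainv a) y = ainv a y.
Proof. intros Ha y; unfold pcomp. destruct (ainv a y) as [x|] eqn:E; auto.
  assert (H : a x = Some y) by (apply (ainv_some a Ha); auto). rewrite H. exact E. Qed.

Definition isid {X} (e : pmap X) := forall x y, e x = Some y -> y = x.

Lemma isid1 {X} (a : pmap X) : pinj a -> isid (pcomp a (ainv a)).
Proof. intros Ha x z; unfold pcomp. destruct (a x) as [y|] eqn:E; [|discriminate].
  intros H. apply (ainv_some a Ha) in H. eapply Ha; eauto. Qed.

Lemma isid2 {X} (a : pmap X) : pinj a -> isid (pcomp (ainv a) a).
Proof. intros Ha y z; unfold pcomp. destruct (ainv a y) as [x|] eqn:E; [|discriminate].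
  intros H. apply (ainv_some a Ha) in E. congruence. Qed.

Lemma rank_drop {X} (k : nat) (e1 e2 : pmap X) : isid e1 -> isid e2 -> rank_le k e1 -> rank_le k e2 ->
  ~ (forall x, e1 x = e2 x) -> exists l, S (length l) <= k /\ forall x y, pcomp e1 e2 x = Some y -> In y l.
Proof.
  intros I1 I2 [l1 [L1 R1]] [l2 [L2 R2]] Hne.
  apply not_all_ex_not in Hne. destruct Hne as [x Hx].
  destruct (e1 x) as [y|] eqn:E1.
  - pose proof (I1 _ _ E1); subst y.
    assert (E2 : e2 x = None).
    { destruct (e2 x) as [z|] eqn:E2; auto. pose proof (I2 _ _ E2); subst; congruence. }
    exists (remove deq x l1). split.
    + pose proof (remove_length_lt deq l1 x (R1 _ _ E1)). lia.
    + intros w v H. unfold pcomp in H. destruct (e1 w) as [u|] eqn:Ew; [|discriminate].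
      pose proof (I1 _ _ Ew); subst u. pose proof (I2 _ _ H); subst v.
      apply in_in_remove. intro; subst; congruence. eapply R1; eauto.
  - assert (E2 : e2 x = Some x).
    { destruct (e2 x) as [z|] eqn:E2; [|congruence]. pose proof (I2 _ _ E2); subst; auto. }
    exists (remove deq x l2). split.
    + pose proof (remove_length_lt deq l2 x (R2 _ _ E2)). lia.
    + intros w v H. unfold pcomp in H. destruct (e1 w) as [u|] eqn:Ew; [|discriminate].
      pose proof (I1 _ _ Ew); subst u. pose proof (I2 _ _ H); subst v.
      apply in_in_remove. intro; subst; congruence. eapply R2; eauto.
Qed.

Lemma sep_list {S} (open : (S->Prop)->Prop) : is_topology open -> hausdorff open ->
  forall L s, ~ In s L -> exists U, open U /\ U s /\ forall t, In t L -> ~ U t.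
Proof.
  intros [Ht [Hi _]] Hh L s; induction L as [|a L IH]; intros Hn.
  - exists (fun _ => True); repeat split; auto.
  - destruct IH as [U [oU [Us HU]]]. { intro; apply Hn; right; auto. }
    destruct (Hh s a) as [V [W [oV [oW [Vs [Wa D]]]]]]. { intro E; apply Hn; left; congruence. }
    exists (fun x => U x /\ V x). repeat split; auto.
    intros t [<-|Ht'] [Ut Vt]; [ eapply D; eauto | eapply HU; eauto].
Qed.

Definition upd {X} (g : pmap X) (a b : X) : pmap X := fun y => if deq y a then Some b else g y.

Lemma codes {X} (l1 l2 : list X) : exists Lp : list (pmap X), forall f : pmap X,
  (forall y z, f y = Some z -> In y l1 /\ In z l2) -> exists g, In g Lp /\ forall y, f y = g y.
Proof.
  induction l1 as [|a l1 IH].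
  - exists [fun _ => None]. intros f Hf. exists (fun _ => None). split; [left; auto|].
    intros y. destruct (f y) eqn:E; auto. destruct (Hf _ _ E) as [[] _].
  - destruct IH as [Lp HLp].
    exists (Lp ++ flat_map (fun b => map (fun g => upd g a b) Lp) l2).
    intros f Hf.
    set (f' := fun y => if deq y a then None else f y).
    destruct (HLp f') as [g [Hg Eg]].
    { intros y z E. unfold f' in E. destruct (deq y a); [discriminate|].
      destruct (Hf _ _ E) as [[Hy|Hy] Hz]; [congruence|auto]. }
    destruct (f a) as [b|] eqn:Ea.
    + exists (upd g a b). split.
      * apply in_or_app; right. apply in_flat_map. exists b. split; [apply (proj2 (Hf _ _ Ea))|]. apply (in_map (fun g0 => upd g0 a b)); auto.
      * intros y. unfold upd. destruct (deq y a) as [->|nn]; try congruence. rewrite <- Eg. unfold f'. destruct (deq y a); [contradiction|auto].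
    + exists g. split; [apply in_or_app; left; auto|].
      intros y. rewrite <- Eg. unfold f'. destruct (deq y a) as [->|]; auto.
Qed.

Lemma fin_img {X S n} (h : In_sg X n -> S) (l1 l2 : list X) : exists L : list S,
  (forall t, In t L -> exists x, h x = t) /\
  (forall x : In_sg X n, (forall y z, proj1_sig x y = Some z -> In y l1 /\ In z l2) -> In (h x) L).
Proof.
  destruct (codes l1 l2) as [Lp HLp].
  exists (flat_map (fun g => match excluded_middle_informative (in_In n g) with left pf => [h (exist _ g pf)] | right _ => [] end) Lp).
  split.
  - intros t Ht. apply in_flat_map in Ht. destruct Ht as [g [_ Hg]].
    destruct (excluded_middle_informative _) as [pf|]; [|destruct Hg].
    destruct Hg as [<-|[]]. eauto.
  - intros x Hx. destruct (HLp _ Hx) as [g [Hg Eg]].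
    apply in_flat_map. exists g. split; auto. cbv beta.
    destruct (excluded_middle_informative (in_In n g)) as [pf|np].
    + left. f_equal. apply sig_ext. simpl. intros; symmetry; auto.
    + exfalso. apply np. assert (proj1_sig x = g) by (apply functional_extensionality; auto). subst. apply proj2_sig.
Qed.

Lemma core {X S0 n} (open : (S0->Prop)->Prop) (mul : S0->S0->S0) (h : In_sg X n -> S0) :
  is_topology open -> hausdorff open -> continuous2 open mul -> is_hom mul h ->
  forall k f, mul f f = f ->
  (forall U, open U -> U f -> exists e : In_sg X n, isid (proj1_sig e) /\ rank_le k (proj1_sig e) /\ U (h e)) ->
  ~ (exists e : In_sg X n, isid (proj1_sig e) /\ h e = f) ->
  forall U, open U -> U f -> exists e : In_sg X n, isid (proj1_sig e) /\
     (exists l, S (length l) <= k /\ forall x y, proj1_sig e x = Some y -> In y l) /\ U (h e).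
Proof.
  intros Ht Hh Hc Hm k f Hf Hcl Hno U oU Uf.
  destruct Ht as [HT [Hi Hu]].
  rewrite <- Hf in Uf.
  destruct (Hc U f f oU Uf) as [V [W [oV [oW [Vf [Wf HVW]]]]]].
  destruct (Hcl (fun x => V x /\ W x) (Hi _ _ oV oW) (conj Vf Wf)) as [e1 [I1 [R1 [V1 W1]]]].
  destruct (Hh (h e1) f) as [U1 [U2 [oU1 [oU2 [U1e [U2f D]]]]]].
  { intro E. apply Hno. exists e1; auto. }
  destruct (Hcl (fun x => (V x /\ W x) /\ U2 x) (Hi _ _ (Hi _ _ oV oW) oU2) (conj (conj Vf Wf) U2f)) as [e2 [I2 [R2 [[V2 W2] U2e]]]].
  exists (In_mul e1 e2). split; [|split].
  - intros x y; simpl. unfold pcomp. destruct (proj1_sig e1 x) eqn:E; [|discriminate]. intros E'. apply I1 in E. apply I2 in E'. congruence.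
  - apply (rank_drop k _ _ I1 I2 R1 R2). intro Heq. assert (e1 = e2) by (apply sig_ext; auto). subst. eapply D; eauto.
  - rewrite Hm. apply HVW; auto.
Qed.

Lemma idem_closed {X S0 n} (open : (S0->Prop)->Prop) (mul : S0->S0->S0) (h : In_sg X n -> S0) :
  is_topology open -> hausdorff open -> continuous2 open mul -> is_hom mul h ->
  forall k f, mul f f = f ->
  (forall U, open U -> U f -> exists e : In_sg X n, isid (proj1_sig e) /\ rank_le k (proj1_sig e) /\ U (h e)) ->
  exists e : In_sg X n, isid (proj1_sig e) /\ h e = f.
Proof.
  intros Ht Hh Hc Hm k. induction k as [|k IH]; intros f Hf Hcl;
    (destruct (classic (exists e : In_sg X n, isid (proj1_sig e) /\ h e = f)) as [?|Hno]; [assumption|]);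
    pose proof (core open mul h Ht Hh Hc Hm _ f Hf Hcl Hno) as C.
  - exfalso. destruct (C (fun _ => True)) as [e [_ [[l [Hl _]] _]]]; [apply Ht|auto|]. lia.
  - apply IH; auto. intros U oU Uf. destruct (C U oU Uf) as [e [Ie [[l [Hl Hr]] Ue]]].
    exists e; repeat split; auto. exists l; split; [lia|auto].
Qed.

Theorem theorem1 (X : Type) (HX : inhabited X) (n : nat) (Hn : 0 < n)
  (S : Type) (open : (S -> Prop) -> Prop) (mul : S -> S -> S) (inv : S -> S)
  (HS : is_hausdorff_top_inv_semigroup open mul inv)
  (h : In_sg X n -> S) (Hh : is_hom mul h) :
  closed_set open (fun s => exists a, h a = s).
Proof.
  destruct HS as [Ht [Hhd [Hinv [Hc Hci]]]].
  destruct Hinv as [Hassoc [Hinv1 Huniq]].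
  pose proof Ht as Ht'. destruct Ht' as [HT [Hi Hu]].
  set (T := fun s => exists a, h a = s).
  assert (Hhinv : forall a : In_sg X n, h (sinv a) = inv (h a)).
  { intros a. destruct a as [a [pa ra]].
    apply Huniq; rewrite <- !Hh; f_equal; apply sig_ext; simpl; intro z.
    - apply ainv_id1; auto.
    - apply ainv_id2; auto. }
  assert (Hcl : forall s, (forall U, open U -> U s -> exists a, U (h a)) -> T s).
  { intros s Hs.
    destruct (Hinv1 s) as [Hs1 Hs2].
    assert (Hff : mul (mul s (inv s)) (mul s (inv s)) = mul s (inv s)).
    { rewrite <- (Hassoc (mul s (inv s)) s (inv s)), Hs1. auto. }
    assert (Hgg : mul (mul (inv s) s) (mul (inv s) s) = mul (inv s) s).
    { rewrite <- (Hassoc (mul (inv s) s) (inv s) s), Hs2. auto. }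
    destruct (idem_closed open mul h Ht Hhd Hc Hh n _ Hff) as [e1 [I1 E1]].
    { intros U oU Uf. destruct (Hc U s (inv s) oU Uf) as [V [W [oV [oW [Vs [Wi HVW]]]]]].
      destruct (Hs (fun x => V x /\ W (inv x))) as [a [Va Wa]].
      { apply Hi; [exact oV | exact (Hci W oW)]. } { split; auto. }
      exists (In_mul a (sinv a)). split; [|split].
      - apply isid1. apply (proj2_sig a).
      - apply (proj2 (proj2_sig (In_mul a (sinv a)))).
      - rewrite Hh, Hhinv. auto. }
    destruct (idem_closed open mul h Ht Hhd Hc Hh n _ Hgg) as [e2 [I2 E2]].
    { intros U oU Uf. destruct (Hc U (inv s) s oU Uf) as [V [W [oV [oW [Vs [Wi HVW]]]]]].
      destruct (Hs (fun x => V (inv x) /\ W x)) as [a [Va Wa]].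
      { apply Hi; [exact (Hci V oV) | exact oW]. } { split; auto. }
      exists (In_mul (sinv a) a). split; [|split].
      - apply isid2. apply (proj2_sig a).
      - apply (proj2 (proj2_sig (In_mul (sinv a) a))).
      - rewrite Hh, Hhinv. auto. }
    assert (Hseq : mul (mul (h e1) s) (h e2) = s).
    { rewrite E1, E2, Hs1, <- Hassoc. exact Hs1. }
    destruct (proj2 (proj2_sig e1)) as [l1 [_ R1]].
    destruct (proj2 (proj2_sig e2)) as [l2 [_ R2]].
    destruct (fin_img h l1 l2) as [L [HL1 HL2]].
    destruct (classic (In s L)) as [Hin|Hnin]; [apply HL1; auto|].
    exfalso.
    destruct (sep_list open Ht Hhd L s Hnin) as [U [oU [Us HU]]].
    rewrite <- Hseq in Us.
    destruct (Hc U _ _ oU Us) as [V [W [oV [oW [Vs [We HVW]]]]]].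
    destruct (Hc V _ _ oV Vs) as [V1 [V2 [oV1 [oV2 [V1e [V2s HV]]]]]].
    destruct (Hs V2 oV2 V2s) as [a Ha].
    apply (HU (h (In_mul (In_mul e1 a) e2))).
    - apply HL2. intros y z; simpl; unfold pcomp.
      destruct (proj1_sig e1 y) as [u|] eqn:Eu; [|discriminate].
      pose proof (I1 _ _ Eu); subst u.
      destruct (proj1_sig a y) as [w|] eqn:Ew; [|discriminate].
      intros Ez. split; [eapply R1; eauto | eapply R2; eauto].
    - rewrite !Hh. apply HVW; auto. }
  unfold closed_set.
  assert (E : (fun x => ~ T x) = (fun x => exists U, (open U /\ forall y, U y -> ~ T y) /\ U x)).
  { apply functional_extensionality; intro x; apply propositional_extensionality; split.
    - intros Hx. destruct (classic (exists U, open U /\ U x /\ forall y, U y -> ~ T y)) as [[U [oU [Ux HU]]]|Hnn].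
      + exists U; auto.
      + exfalso. apply Hx, Hcl. intros U oU Ux. apply NNPP; intro Hna. apply Hnn. exists U; repeat split; auto.
        intros y Uy [a Ha]. apply Hna; exists a; congruence.
    - intros [U [[oU HU] Ux]]. apply HU; auto. }
  rewrite E. apply Hu. intros U [? _]; auto.
Qed.
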